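(* Let $c\in(0,1)$ and let $\sigma>0$ satisfy $C_{\mathrm{BS}}(\sigma)=c$. Let $g(y)=\log C_{\mathrm{BS}}(y)-\log c$ for $y>0$. The Newton–Raphson iteration $\sigma_{n+1}=\sigma_n-g(\sigma_n)/g'(\sigma_n)$ for the equation $g(y)=0$ can be written as $\sigma_{n+1}=N(\sigma_n)$ with $$N(y)=y+\left[\frac{d_1(y)^2}{2}-\log C_{\mathcal V}(y)+\log\!\big(c\sqrt{2\pi}\big)\right]C_{\mathcal V}(y).$$ Moreover, if $0<\sigma_0\le\sigma$, then the iterates satisfy $\sigma_0\le\sigma_1\le\sigma_2\le\cdots\le\sigma$ and $\sigma_n\to\sigma$ as $n\to\infty$.
   Context: Fix $k\ge 0$. Let $\Phi$ and $\phi$ denote the standard normal distribution function and density. For $\sigma>0$ put $d_1(\sigma)=-k/\sigma+\sigma/2$, $d_2(\sigma)=-k/\sigma-\sigma/2$, and $C_{\mathrm{BS}}(\sigma)=\Phi(d_1(\sigma))-e^k\,\Phi(d_2(\sigma))$, a strictly increasing bijection from $(0,\infty)$ onto $(0,1)$; for $c\in(0,1)$ the implied volatility is the unique $\sigma>0$ with $C_{\mathrm{BS}}(\sigma)=c$. The price-to-vega ratio is $C_{\mathcal V}(y)=C_{\mathrm{BS}}(y)/\phi(d_1(y))$. *)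

(* Defs.v *)
From Stdlib Require Import Reals.
From Coquelicot Require Import Coquelicot.
Open Scope R_scope.

Definition phi (x : R) : R := exp (- x ^ 2 / 2) / sqrt (2 * PI).

Definition Phi (x : R) : R :=
  RInt_gen phi (Rbar_locally m_infty) (at_point x).

Definition d1 (k s : R) : R := - k / s + s / 2.
Definition d2 (k s : R) : R := - k / s - s / 2.

Definition C_BS (k s : R) : R := Phi (d1 k s) - exp k * Phi (d2 k s).

Definition C_V (k y : R) : R := C_BS k y / phi (d1 k y).

Definition g_fun (k c y : R) : R := ln (C_BS k y) - ln c.

Definition N_map (k c y : R) : R :=
  y + ((d1 k y) ^ 2 / 2 - ln (C_V k y) + ln (c * sqrt (2 * PI))) * C_V k y.

(* Main.v *)
Require Import Defs.
From Stdlib Require Import Reals Lra Psatz.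
From Coquelicot Require Import Coquelicot.
Open Scope R_scope.

Lemma exp_le_3 : forall x y, x <= y -> exp x <= exp y.
Proof. intros x y [H|H]. left; now apply exp_increasing. now subst. Qed.

Lemma s2pi_pos : 0 < sqrt (2 * PI).
Proof. apply sqrt_lt_R0. generalize PI_RGT_0; lra. Qed.

Lemma phi_pos x : 0 < phi x.
Proof. unfold phi. apply Rdiv_lt_0_compat. apply exp_pos. apply s2pi_pos. Qed.

Lemma phi_cont x : continuous phi x.
Proof. apply (ex_derive_continuous (K:=R_AbsRing) (V:=R_NormedModule) phi). unfold phi. auto_derive. generalize s2pi_pos; lra. Qed.

Definition Kb := exp (1/2) / sqrt (2 * PI).

Lemma Kb_pos : 0 < Kb.
Proof. unfold Kb. apply Rdiv_lt_0_compat. apply exp_pos. apply s2pi_pos. Qed.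

Lemma phi_bnd x : phi x <= Kb * exp x.
Proof.
  unfold phi, Kb. unfold Rdiv. rewrite Rmult_assoc, (Rmult_comm (/ _)), <- Rmult_assoc.
  apply Rmult_le_compat_r. left; apply Rinv_0_lt_compat, s2pi_pos.
  rewrite <- exp_plus. apply exp_le_3. assert (H: 0 <= (x+1)*(x+1)) by apply Rle_0_sqr. simpl. lra.
Qed.

Lemma phi_ex a b : ex_RInt phi a b.
Proof. apply (ex_RInt_continuous (V:=R_CompleteNormedModule)). intros; apply phi_cont. Qed.

Lemma phi_corr a b : is_RInt phi a b (RInt phi a b).
Proof. apply (RInt_correct (V:=R_CompleteNormedModule)), phi_ex. Qed.

Lemma RInt_phi_bnd a b : a <= b -> 0 <= RInt phi a b <= Kb * exp b.
Proof.
  intros Hab. split.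
  - apply is_RInt_le with (f := fun _ => 0) (g := phi) (a := a) (b := b); auto.
    + assert (Hc := @is_RInt_const R_NormedModule a b 0).
      unfold scal in Hc; simpl in Hc; unfold mult in Hc; simpl in Hc. rewrite Rmult_0_r in Hc. exact Hc.
    + apply phi_corr.
    + intros; left; apply phi_pos.
  - apply Rle_trans with (Kb * (exp b - exp a)).
    + apply is_RInt_le with (f := phi) (g := fun t => scal Kb (exp t)) (a := a) (b := b); auto.
      * apply phi_corr.
      * exact (is_RInt_scal (V:=R_NormedModule) exp a b Kb _ (is_RInt_exp a b)).
      * intros t _. apply phi_bnd.
    + generalize Kb_pos (exp_pos a); intros; nra.
Qed.

Lemma Phi_lim x : filterlim (fun a => RInt phi a x) (Rbar_locally m_infty) (locally (Phi x)).
Proof.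
  assert (Hc : exists y, filterlim (fun a => RInt phi a x) (Rbar_locally m_infty) (locally y)).
  { apply filterlim_locally_cauchy.
    intros eps. exists (fun a => a < ln (eps / Kb) /\ a < x). split.
    - exists (Rmin (ln (eps / Kb)) x). intros a Ha. split.
      + apply Rlt_le_trans with (1 := Ha), Rmin_l.
      + apply Rlt_le_trans with (1 := Ha), Rmin_r.
    - assert (Hkey : forall u v, u <= v -> v < ln (eps / Kb) -> v < x ->
               Rabs (RInt phi v x - RInt phi u x) < eps).
      { intros u v Huv Hv Hvx.
        rewrite <- (RInt_Chasles phi u v x) by apply phi_ex.
        change (plus (RInt phi u v) (RInt phi v x)) with (RInt phi u v + RInt phi v x).
        replace (RInt phi v x - (RInt phi u v + RInt phi v x)) with (- RInt phi u v) by ring.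
        rewrite Rabs_Ropp.
        destruct (RInt_phi_bnd u v Huv) as [H0 H1].
        rewrite Rabs_pos_eq by exact H0.
        apply Rle_lt_trans with (1 := H1).
        assert (exp v < eps / Kb).
        { rewrite <- (exp_ln (eps / Kb)). now apply exp_increasing.
          apply Rdiv_lt_0_compat. apply cond_pos. apply Kb_pos. }
        generalize Kb_pos; intros. 
        replace (pos eps) with (Kb * (eps / Kb)) by (field; lra).
        apply Rmult_lt_compat_l; auto. }
      intros u v [Hu Hux] [Hv Hvx].
      change (Rabs (RInt phi v x - RInt phi u x) < eps).
      destruct (Rle_dec u v) as [Huv|Huv].
      + apply Hkey; auto.
      + rewrite <- Rabs_Ropp. replace (- (RInt phi v x - RInt phi u x)) with (RInt phi u x - RInt phi v x) by ring.
        apply Hkey; auto. lra. }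
  destruct Hc as [y Hy].
  assert (H : is_RInt_gen phi (Rbar_locally m_infty) (at_point x) y).
  { unfold is_RInt_gen.
    apply filterlimi_lim_ext_loc with (f := fun ab => RInt phi (fst ab) (snd ab)).
    - exists (fun _ => True) (fun _ => True).
      + exists 0; auto.
      + unfold at_point; auto.
      + intros a b _ _. apply phi_corr.
    - intros P HP. destruct (Hy P HP) as [M HM].
      exists (fun a => a < M) (fun b => b = x).
      + exists M; auto.
      + unfold at_point; auto.
      + intros a b Ha ->. simpl. now apply HM. }
  unfold Phi. rewrite (is_RInt_gen_unique _ _ H). exact Hy.
Qed.

Lemma Phi_is_lim x : is_lim (fun a => RInt phi a x) m_infty (Phi x).
Proof. exact (Phi_lim x). Qed.

Lemma Phi_chasles x y : Phi y = Phi x + RInt phi x y.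
Proof.
  assert (H1 : is_lim (fun a => RInt phi a x + RInt phi x y) m_infty (Phi x + RInt phi x y)).
  { apply (is_lim_plus' (fun a => RInt phi a x) (fun _ => RInt phi x y)).
    apply Phi_is_lim. apply is_lim_const. }
  assert (H2 : is_lim (fun a => RInt phi a x + RInt phi x y) m_infty (Phi y)).
  { apply is_lim_ext with (f := fun a => RInt phi a y). 2: apply Phi_is_lim.
    intros a. symmetry. apply (RInt_Chasles (V:=R_CompleteNormedModule)); apply phi_ex. }
  generalize (is_lim_unique _ _ _ H1) (is_lim_unique _ _ _ H2). intros E1 E2.
  rewrite E1 in E2. now injection E2.
Qed.

Lemma Phi_bnd x : 0 <= Phi x <= Kb * exp x.
Proof.
  split.
  - assert (H := filterlim_le (F := Rbar_locally m_infty) (fun _ => 0) (fun a => RInt phi a x) 0 (Phi x)).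
    simpl in H. apply H.
    + exists x. intros a Ha. apply RInt_phi_bnd. lra.
    + apply filterlim_const.
    + apply Phi_lim.
  - assert (H := filterlim_le (F := Rbar_locally m_infty) (fun a => RInt phi a x) (fun _ => Kb * exp x) (Phi x) (Kb * exp x)).
    simpl in H. apply H.
    + exists x. intros a Ha. apply RInt_phi_bnd. lra.
    + apply Phi_lim.
    + apply filterlim_const.
Qed.

Lemma Phi_deriv x : is_derive Phi x (phi x).
Proof.
  apply is_derive_ext with (f := fun y => Phi 0 + RInt phi 0 y).
  { intros t. symmetry. apply Phi_chasles. }
  replace (phi x) with (0 + phi x) by ring.
  apply (is_derive_plus (K:=R_AbsRing) (V:=R_NormedModule) (fun _ => Phi 0) (RInt phi 0)).
  exact (is_derive_const (K:=R_AbsRing) (V:=R_NormedModule) (Phi 0) x).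
  apply (is_derive_RInt (V:=R_NormedModule) phi (RInt phi 0) 0 x).
  - apply filter_forall. intros b. apply phi_corr.
  - apply phi_cont.
Qed.

Lemma key_id k v : v <> 0 -> exp k * phi (Defs.d2 k v) = phi (Defs.d1 k v).
Proof.
  intros Hv. unfold phi. unfold Rdiv at 1 3. rewrite <- Rmult_assoc, <- exp_plus.
  f_equal. f_equal. unfold Defs.d1, Defs.d2. field. auto.
Qed.

Lemma d1_deriv k v : v <> 0 -> is_derive (Defs.d1 k) v (k / v ^ 2 + 1 / 2).
Proof. intros Hv. unfold Defs.d1. auto_derive. auto. field. auto. Qed.

Lemma d2_deriv k v : v <> 0 -> is_derive (Defs.d2 k) v (k / v ^ 2 - 1 / 2).
Proof. intros Hv. unfold Defs.d2. auto_derive. auto. field. auto. Qed.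

Lemma C_deriv k v : v <> 0 -> is_derive (C_BS k) v (phi (Defs.d1 k v)).
Proof.
  intros Hv. unfold C_BS.
  assert (H1 : is_derive (fun s => Phi (Defs.d1 k s)) v ((k / v ^ 2 + 1 / 2) * phi (Defs.d1 k v))).
  { apply (is_derive_comp Phi (Defs.d1 k) v). apply Phi_deriv. now apply d1_deriv. }
  assert (H2 : is_derive (fun s => Phi (Defs.d2 k s)) v ((k / v ^ 2 - 1 / 2) * phi (Defs.d2 k v))).
  { apply (is_derive_comp Phi (Defs.d2 k) v). apply Phi_deriv. now apply d2_deriv. }
  assert (H3 : is_derive (fun s => exp k * Phi (Defs.d2 k s)) v (exp k * ((k / v ^ 2 - 1 / 2) * phi (Defs.d2 k v)))).
  { apply (is_derive_scal (fun s => Phi (Defs.d2 k s))). exact H2. }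
  assert (H4 := is_derive_minus _ _ _ _ _ H1 H3).
  simpl in H4. unfold minus, plus, opp in H4; simpl in H4.
  replace (phi (Defs.d1 k v)) with ((k / v ^ 2 + 1 / 2) * phi (Defs.d1 k v) + - (exp k * ((k / v ^ 2 - 1 / 2) * phi (Defs.d2 k v)))).
  exact H4.
  rewrite <- (key_id k v Hv). set (X := exp k * phi (Defs.d2 k v)). set (a := k / v ^ 2). change (((a + 1/2) * X + - (exp k * ((a - 1/2) * phi (Defs.d2 k v))) = X :> R)). unfold X. field.
Qed.

Lemma phi_le x : phi x <= / sqrt (2 * PI).
Proof.
  unfold phi, Rdiv. rewrite <- (Rmult_1_l (/ sqrt (2 * PI))) at 2.
  apply Rmult_le_compat_r. left; apply Rinv_0_lt_compat, s2pi_pos.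
  rewrite <- exp_0. apply exp_le_3. assert (0 <= x * x) by apply Rle_0_sqr. simpl. lra.
Qed.

Lemma C_small k v : 0 <= k -> 0 < v ->
  - (Kb * exp k) * v <= C_BS k v <= v * / sqrt (2 * PI).
Proof.
  intros Hk Hv. unfold C_BS.
  assert (Hd : Defs.d1 k v = Defs.d2 k v + v) by (unfold Defs.d1, Defs.d2; field; lra).
  rewrite (Phi_chasles (Defs.d2 k v) (Defs.d1 k v)).
  assert (HR : 0 <= RInt phi (Defs.d2 k v) (Defs.d1 k v) <= v * / sqrt (2 * PI)).
  { split. apply RInt_phi_bnd. lra.
    eapply Rle_trans. apply Rle_abs.
    replace (v * / sqrt (2 * PI)) with ((Defs.d1 k v - Defs.d2 k v) * / sqrt (2 * PI)) by (rewrite Hd; ring).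
    apply (norm_RInt_le_const (V:=R_NormedModule) phi). lra.
    intros x _. unfold norm; simpl. rewrite Rabs_pos_eq. apply phi_le. left; apply phi_pos.
    apply phi_corr. }
  destruct (Phi_bnd (Defs.d2 k v)) as [P0 P1].
  assert (E1 : exp k - 1 <= k * exp k).
  { generalize (exp_ineq1_le (- k)). rewrite exp_Ropp. intros H.
    generalize (exp_pos k); intros.
    apply Rmult_le_compat_r with (r := exp k) in H. 2: lra.
    rewrite Rinv_l in H by lra. lra. }
  assert (E0 : 1 <= exp k) by (rewrite <- exp_0; apply exp_le_3; lra).
  assert (E2 : (exp k - 1) * exp (Defs.d2 k v) <= exp k * v).
  { assert (Hd2 : exp (Defs.d2 k v) <= / exp (k / v)).
    { rewrite <- exp_Ropp. apply exp_le_3. unfold Defs.d2. unfold Rdiv. lra. }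
    generalize (exp_ineq1_le (k / v)). intros H.
    assert (HE : 0 < exp (k / v)) by apply exp_pos.
    assert (k <= v * exp (k / v)).
    { assert (v * (1 + k / v) = v + k) by (field; lra). nra. }
    assert (0 <= exp k - 1) by lra.
    apply Rle_trans with ((exp k - 1) * / exp (k / v)).
    apply Rmult_le_compat_l; lra.
    apply Rle_trans with (k * exp k * / exp (k/v)).
    apply Rmult_le_compat_r. left; apply Rinv_0_lt_compat; lra. lra.
    apply Rmult_le_reg_r with (exp (k / v)). lra.
    rewrite Rmult_assoc, Rinv_l by lra. generalize (exp_pos k); intros. nra. }
  generalize Kb_pos; intros.
  split.
  - apply Rle_trans with (- ((exp k - 1) * (Kb * exp (Defs.d2 k v)))).
    + nra.
    + assert (0 <= exp k - 1) by lra. nra.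
  - assert (0 <= exp k - 1) by lra. nra.
Qed.

Lemma deriv_nonpos_decr (h dh : R -> R) a b : a <= b ->
  (forall x, a <= x <= b -> is_derive h x (dh x)) ->
  (forall x, a <= x <= b -> dh x <= 0) -> h b <= h a.
Proof.
  intros Hab Hd Hs.
  destruct (MVT_gen h a b dh) as [c [Hc Eq]].
  - intros x Hx. rewrite Rmin_left, Rmax_right in Hx by lra. apply Hd; lra.
  - intros x Hx. rewrite Rmin_left, Rmax_right in Hx by lra.
    apply continuity_pt_filterlim. apply (ex_derive_continuous (K:=R_AbsRing) (V:=R_NormedModule)).
    exists (dh x). apply Hd; lra.
  - rewrite Rmin_left, Rmax_right in Hc by lra.
    assert (dh c <= 0) by (apply Hs; lra). nra.
Qed.

Lemma deriv_pos_incr (h dh : R -> R) a b : a < b ->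
  (forall x, a <= x <= b -> is_derive h x (dh x)) ->
  (forall x, a <= x <= b -> 0 < dh x) -> h a < h b.
Proof.
  intros Hab Hd Hs.
  destruct (MVT_gen h a b dh) as [c [Hc Eq]].
  - intros x Hx. rewrite Rmin_left, Rmax_right in Hx by lra. apply Hd; lra.
  - intros x Hx. rewrite Rmin_left, Rmax_right in Hx by lra.
    apply continuity_pt_filterlim. apply (ex_derive_continuous (K:=R_AbsRing) (V:=R_NormedModule)).
    exists (dh x). apply Hd; lra.
  - rewrite Rmin_left, Rmax_right in Hc by lra.
    assert (0 < dh c) by (apply Hs; lra). nra.
Qed.

Lemma C_incr k a b : 0 < a < b -> C_BS k a < C_BS k b.
Proof.
  intros H. apply (deriv_pos_incr _ (fun v => phi (Defs.d1 k v))). lra.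
  intros x Hx. apply C_deriv. lra.
  intros; apply phi_pos.
Qed.

Lemma C_pos k v : 0 <= k -> 0 < v -> 0 < C_BS k v.
Proof.
  intros Hk Hv.
  assert (H0 : 0 <= C_BS k (v / 2)).
  { destruct (Rle_lt_dec 0 (C_BS k (v / 2))) as [H|H]; auto.
    exfalso.
    assert (HK : 0 < Kb * exp k) by (generalize Kb_pos (exp_pos k); intros; nra).
    set (w := Rmin (v / 4) (- C_BS k (v / 2) / (2 * (Kb * exp k)))).
    assert (Hw1 : w <= v / 4) by apply Rmin_l.
    assert (Hw2 : w <= - C_BS k (v / 2) / (2 * (Kb * exp k))) by apply Rmin_r.
    assert (Hw0 : 0 < w).
    { unfold w. apply Rmin_glb_lt. lra. apply Rdiv_lt_0_compat; lra. }
    destruct (C_small k w Hk Hw0) as [L _].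
    assert (C_BS k w < C_BS k (v / 2)) by (apply C_incr; lra).
    assert (Kb * exp k * w <= - C_BS k (v / 2) / 2).
    { assert (H2 := Rmult_le_compat_l (Kb * exp k) _ _ (Rlt_le _ _ HK) Hw2). clear Hw2. rename H2 into Hw2.
      replace (Kb * exp k * (- C_BS k (v / 2) / (2 * (Kb * exp k)))) with (- C_BS k (v / 2) / 2) in Hw2 by (field; generalize Kb_pos (exp_pos k); intros; repeat split; lra).
      lra. }
    lra. }
  assert (C_BS k (v / 2) < C_BS k v) by (apply C_incr; lra). lra.
Qed.

Definition rr (k v : R) : R := k ^ 2 / v ^ 3 - v / 4.

Lemma f_deriv k v : 0 < v -> is_derive (fun s => phi (Defs.d1 k s)) v (phi (Defs.d1 k v) * rr k v).
Proof.
  intros Hv. unfold phi, Defs.d1, rr. auto_derive.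
  - generalize s2pi_pos; intros; repeat split; lra.
  - replace (exp (- (- k / v + v / 2) ^ 2 / 2)) with (exp (- ((- k * / v + v * / 2) * ((- k * / v + v * / 2) * 1)) * / 2)) by (f_equal; field; lra). field. generalize s2pi_pos; intros; split; lra.
Qed.

Lemma tangent_ell k v s : 0 < v -> 0 < s ->
  - (Defs.d1 k v) ^ 2 / 2 <= - (Defs.d1 k s) ^ 2 / 2 + rr k s * (v - s).
Proof.
  intros Hv Hs. unfold Defs.d1, rr.
  assert (E : - (- k / s + s / 2) ^ 2 / 2 + (k ^ 2 / s ^ 3 - s / 4) * (v - s) - (- (- k / v + v / 2) ^ 2 / 2)
    = (v - s) ^ 2 / 8 + k ^ 2 * ((v - s) ^ 2 * (2 * v + s)) / (2 * v ^ 2 * s ^ 3)).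
  { field. lra. }
  assert (0 <= (v - s) ^ 2 / 8).
  { apply Rmult_le_pos. apply pow2_ge_0. lra. }
  assert (0 <= k ^ 2 * ((v - s) ^ 2 * (2 * v + s)) / (2 * v ^ 2 * s ^ 3)).
  { apply Rmult_le_pos. apply Rmult_le_pos. apply pow2_ge_0. apply Rmult_le_pos. apply pow2_ge_0. lra.
    left. apply Rinv_0_lt_compat. apply Rmult_lt_0_compat. apply Rmult_lt_0_compat. lra. apply pow_lt; lra.
    apply pow_lt; lra. }
  lra.
Qed.

Lemma f_tangent k v s : 0 < v -> 0 < s ->
  phi (Defs.d1 k v) <= phi (Defs.d1 k s) * exp (rr k s * (v - s)).
Proof.
  intros Hv Hs. unfold phi, Rdiv.
  rewrite Rmult_assoc, (Rmult_comm (/ _)), <- Rmult_assoc, <- exp_plus.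
  apply Rmult_le_compat_r. left; apply Rinv_0_lt_compat, s2pi_pos.
  apply exp_le_3. generalize (tangent_ell k v s Hv Hs). unfold Rdiv. lra.
Qed.

Lemma C_le_bound k s : 0 <= k -> 0 < s -> 0 < rr k s ->
  C_BS k s <= phi (Defs.d1 k s) / rr k s.
Proof.
  intros Hk Hs Hr.
  set (r := rr k s). set (F := phi (Defs.d1 k s)).
  set (H := fun v => F / r * exp (r * (v - s))).
  assert (Hdec : forall w, 0 < w <= s -> C_BS k s - H s <= C_BS k w - H w).
  { intros w Hw.
    apply (deriv_nonpos_decr (fun v => C_BS k v - H v) (fun v => phi (Defs.d1 k v) - F * exp (r * (v - s)))).
    lra.
    - intros x Hx. apply (is_derive_minus (K:=R_AbsRing) (V:=R_NormedModule)).
      apply C_deriv; lra.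
      unfold H. auto_derive. auto. replace (x + - s) with (x - s) by ring. field. unfold r; lra.
    - intros y Hy. generalize (f_tangent k y s ltac:(lra) Hs). fold r F. lra. }
  assert (HF : 0 < F) by apply phi_pos.
  assert (Hs' : H s = F / r).
  { unfold H. replace (r * (s - s)) with 0 by ring. rewrite exp_0. ring. }
  assert (Hpos : forall w, 0 < H w).
  { intros w. unfold H; cbv beta. apply Rmult_lt_0_compat. apply Rdiv_lt_0_compat. exact HF. exact Hr. apply exp_pos. }
  rewrite <- Hs'.
  destruct (Rle_lt_dec (C_BS k s - H s) 0) as [Hc|Hc]. lra.
  exfalso.
  set (eps := C_BS k s - H s).
  assert (Heps : 0 < eps) by exact Hc.
  set (w := Rmin s (eps * sqrt (2 * PI) / 2)).
  assert (Hw0 : 0 < w).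
  { unfold w. apply Rmin_glb_lt. lra. generalize s2pi_pos; intros.
    apply Rdiv_lt_0_compat. apply Rmult_lt_0_compat; lra. lra. }
  assert (Hw1 : w <= s) by apply Rmin_l.
  assert (Hw2 : w <= eps * sqrt (2 * PI) / 2) by apply Rmin_r.
  specialize (Hdec w (conj Hw0 Hw1)).
  destruct (C_small k w Hk Hw0) as [_ U].
  specialize (Hpos w).
  assert (w * / sqrt (2 * PI) <= eps / 2).
  { generalize s2pi_pos; intros.
    apply Rmult_le_reg_r with (sqrt (2 * PI)); auto.
    rewrite Rmult_assoc, Rinv_l by lra. lra. }
  fold eps in Hdec. lra.
Qed.

Definition uu k v := phi (Defs.d1 k v) / C_BS k v.

Lemma u_noninc k a b : 0 <= k -> 0 < a <= b -> uu k b <= uu k a.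
Proof.
  intros Hk Hab.
  apply (deriv_nonpos_decr (uu k) (fun v => (phi (Defs.d1 k v) * rr k v * C_BS k v - phi (Defs.d1 k v) * phi (Defs.d1 k v)) / C_BS k v ^ 2)).
  lra.
  - intros x Hx. unfold uu. apply (is_derive_div (fun s => phi (Defs.d1 k s)) (C_BS k)).
    apply f_deriv; lra. apply C_deriv; lra. apply Rgt_not_eq, C_pos; lra.
  - intros x Hx.
    assert (HC : 0 < C_BS k x) by (apply C_pos; lra).
    assert (HF : 0 < phi (Defs.d1 k x)) by apply phi_pos.
    assert (Hn : rr k x * C_BS k x <= phi (Defs.d1 k x)).
    { destruct (Rle_lt_dec (rr k x) 0) as [Hr|Hr].
      - assert (rr k x * C_BS k x <= 0) by nra. lra.
      - assert (Hb := C_le_bound k x Hk ltac:(lra) Hr).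
        apply Rmult_le_compat_l with (r := rr k x) in Hb. 2: lra.
        replace (rr k x * (phi (Defs.d1 k x) / rr k x)) with (phi (Defs.d1 k x)) in Hb by (field; lra).
        lra. }
    unfold Rdiv. apply Rmult_le_0_r.
    + replace (phi (Defs.d1 k x) * rr k x * C_BS k x - phi (Defs.d1 k x) * phi (Defs.d1 k x))
        with (phi (Defs.d1 k x) * (rr k x * C_BS k x - phi (Defs.d1 k x))) by ring.
      assert (rr k x * C_BS k x - phi (Defs.d1 k x) <= 0) by lra. nra.
    + left. apply Rinv_0_lt_compat. apply pow_lt. lra.
Qed.

Lemma g_deriv k c y : 0 <= k -> 0 < y -> is_derive (g_fun k c) y (uu k y).
Proof.
  intros Hk Hy. unfold g_fun, uu.
  assert (HC : 0 < C_BS k y) by (apply C_pos; lra).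
  replace (phi (Defs.d1 k y) / C_BS k y) with (phi (Defs.d1 k y) * / C_BS k y - 0) by (unfold Rdiv; ring).
  apply (is_derive_minus (K:=R_AbsRing) (V:=R_NormedModule) (fun v => ln (C_BS k v)) (fun _ => ln c)).
  - apply (is_derive_comp ln (C_BS k) y). 
    + auto_derive. lra. field. lra.
    + apply C_deriv; lra.
  - exact (is_derive_const (K:=R_AbsRing) (V:=R_NormedModule) (ln c) y).
Qed.

Lemma g_tangent k c y s : 0 <= k -> 0 < y <= s ->
  g_fun k c s <= g_fun k c y + uu k y * (s - y).
Proof.
  intros Hk Hys.
  destruct (MVT_gen (g_fun k c) y s (uu k)) as [xi [Hxi Eq]].
  - intros x Hx. rewrite Rmin_left, Rmax_right in Hx by lra. apply g_deriv; lra.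
  - intros x Hx. rewrite Rmin_left, Rmax_right in Hx by lra.
    apply continuity_pt_filterlim. apply (ex_derive_continuous (K:=R_AbsRing) (V:=R_NormedModule)).
    exists (uu k x). apply g_deriv; lra.
  - rewrite Rmin_left, Rmax_right in Hxi by lra.
    assert (uu k xi <= uu k y) by (apply u_noninc; lra).
    assert (0 <= s - y) by lra. nra.
Qed.

Lemma N_identity k c y : 0 <= k -> 0 < c -> 0 < y ->
  y - g_fun k c y / uu k y = N_map k c y.
Proof.
  intros Hk Hc Hy.
  assert (HC : 0 < C_BS k y) by (apply C_pos; lra).
  assert (HF : 0 < phi (Defs.d1 k y)) by apply phi_pos.
  generalize s2pi_pos; intros Hs.
  unfold N_map, C_V, g_fun, uu.
  rewrite ln_div by auto. rewrite ln_mult by auto.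
  assert (Hl : ln (phi (Defs.d1 k y)) = - (Defs.d1 k y) ^ 2 / 2 - ln (sqrt (2 * PI))).
  { unfold phi. rewrite ln_div by (auto; apply exp_pos). rewrite ln_exp. reflexivity. }
  rewrite Hl. field. split; lra.
Qed.

Theorem proposition6 (k c sigma : R) :
  0 <= k -> 0 < c < 1 -> 0 < sigma -> C_BS k sigma = c ->
  (forall y, 0 < y ->
     ex_derive (g_fun k c) y /\
     y - g_fun k c y / Derive (g_fun k c) y = N_map k c y) /\
  (forall s : nat -> R,
     0 < s 0%nat <= sigma ->
     (forall n, s (S n) = s n - g_fun k c (s n) / Derive (g_fun k c) (s n)) ->
     (forall n, s n <= s (S n)) /\ (forall n, s n <= sigma) /\
     is_lim_seq s sigma).
Proof.
  intros Hk Hc Hsig HCs.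
  assert (HD : forall y, 0 < y -> Derive (g_fun k c) y = uu k y).
  { intros y Hy. apply is_derive_unique. apply g_deriv; auto. }
  assert (Hupos : forall y, 0 < y -> 0 < uu k y).
  { intros y Hy. unfold uu. apply Rdiv_lt_0_compat. apply phi_pos. apply C_pos; auto. }
  assert (Hgneg : forall y, 0 < y <= sigma -> g_fun k c y <= 0).
  { intros y Hy. unfold g_fun. rewrite <- HCs.
    assert (C_BS k y <= C_BS k sigma).
    { destruct (Req_dec y sigma) as [->|Hne]. lra. left; apply C_incr; lra. }
    assert (ln (C_BS k y) <= ln (C_BS k sigma)) by (apply ln_le; auto; apply C_pos; lra). lra. }
  split.
  { intros y Hy. split. exists (uu k y). apply g_deriv; auto.
    rewrite HD by auto. apply N_identity; lra. }
  intros s Hs0 Hrec.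
  assert (Hrec' : forall n, 0 < s n -> s (S n) = s n - g_fun k c (s n) / uu k (s n)).
  { intros n Hn. rewrite Hrec, HD; auto. }
  assert (Hstep : forall y, 0 < y <= sigma ->
     y <= y - g_fun k c y / uu k y <= sigma).
  { intros y Hy. assert (Hu := Hupos y ltac:(lra)). assert (Hg := Hgneg y Hy).
    assert (Ht := g_tangent k c y sigma Hk Hy).
    assert (E : g_fun k c sigma = 0) by (unfold g_fun; rewrite HCs; ring).
    split.
    - assert (0 <= - g_fun k c y / uu k y). { apply Rdiv_le_0_compat; lra. }
      unfold Rdiv in *. lra.
    - assert (- g_fun k c y / uu k y <= sigma - y).
      { apply Rmult_le_reg_r with (uu k y); auto.
        replace (- g_fun k c y / uu k y * uu k y) with (- g_fun k c y) by (field; lra). lra. }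
      unfold Rdiv in *. lra. }
  assert (Hinv : forall n, 0 < s n <= sigma).
  { induction n as [|n IH]. exact Hs0.
    rewrite Hrec' by lra. destruct (Hstep _ IH). split; lra. }
  assert (Hmono : forall n, s n <= s (S n)).
  { intros n. rewrite Hrec' by (apply Hinv). apply Hstep, Hinv. }
  split; [exact Hmono|]. split; [intros n; apply Hinv|].
  destruct (ex_finite_lim_seq_incr s sigma Hmono (fun n => proj2 (Hinv n))) as [L HL].
  assert (HsL : forall n, s n <= L) by (apply is_lim_seq_incr_compare; auto).
  assert (HLs : L <= sigma).
  { assert (H := is_lim_seq_le s (fun _ => sigma) L sigma (fun n => proj2 (Hinv n)) HL (is_lim_seq_const sigma)).
    simpl in H. exact H. }
  assert (HL0 : 0 < L) by (generalize (HsL 0%nat) (Hinv 0%nat); lra).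
  assert (Hs0n : forall n, s 0%nat <= s n).
  { induction n as [|m IHm]. lra. apply Rle_trans with (s m); auto. }
  set (u0 := uu k (s 0%nat)).
  assert (Hu0 : 0 < u0) by (apply Hupos, Hinv).
  assert (HgL : 0 <= g_fun k c L).
  { assert (Hcmp : forall n, - g_fun k c L / u0 + s n <= s (S n)).
    { intros n.
      assert (Hn := Hinv n).
      assert (Hgmono : - g_fun k c L <= - g_fun k c (s n)).
      { unfold g_fun. assert (ln (C_BS k (s n)) <= ln (C_BS k L)).
        { apply ln_le. apply C_pos; lra.
          destruct (Req_dec (s n) L) as [->|Hne]. lra. left; apply C_incr. split. lra.
          generalize (HsL n); lra. }
        lra. }
      assert (Hun : uu k (s n) <= u0) by (apply u_noninc; auto; split; [apply Hinv| apply Hs0n]).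
      rewrite (Hrec' n) by lra.
      assert (Hun0 := Hupos (s n) ltac:(lra)).
      assert (Hg := Hgneg (s n) Hn).
      assert (- g_fun k c L / u0 <= - g_fun k c (s n) / uu k (s n)).
      { apply Rle_trans with (- g_fun k c (s n) / u0).
        - unfold Rdiv. apply Rmult_le_compat_r. left; apply Rinv_0_lt_compat; auto. auto.
        - unfold Rdiv. apply Rmult_le_compat_l. lra.
          apply Rinv_le_contravar; auto. }
      unfold Rdiv in *. lra. }
    assert (H := is_lim_seq_le _ _ (- g_fun k c L / u0 + L) L Hcmp
      (is_lim_seq_plus' _ _ _ _ (is_lim_seq_const _) HL) (proj1 (is_lim_seq_incr_1 s L) HL)).
    simpl in H.
    assert (- g_fun k c L / u0 <= 0) by lra.
    destruct (Rle_lt_dec 0 (g_fun k c L)) as [?|Hlt]; auto.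
    assert (0 < - g_fun k c L / u0) by (apply Rdiv_lt_0_compat; lra). lra. }
  replace sigma with L. exact HL.
  destruct (Req_dec L sigma) as [E|Hne]; auto. exfalso.
  assert (C_BS k L < C_BS k sigma) by (apply C_incr; lra).
  unfold g_fun in HgL. rewrite HCs in H.
  assert (ln (C_BS k L) < ln c) by (apply ln_increasing; auto; apply C_pos; lra).
  lra.
Qed.
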